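(* Under the standing assumptions below, suppose $3\sigma>2L$, $0<\gamma<\frac{3\sigma-2L}{L^2}$, and that $f+g$ is coercive, i.e. $\liminf_{\|u\|\to\infty}(f+g)(u)=\infty$. Then any sequence $\{(y^t,z^t,x^t)\}$ generated by the PR splitting iteration is bounded.
   Context: Standing assumptions: $f:\mathbb{R}^n\to\mathbb{R}$ is differentiable and strongly convex with modulus at least $\sigma>0$ (i.e. $f-\frac{\sigma}{2}\|\cdot\|^2$ is convex), and $\nabla f$ is Lipschitz continuous with modulus at most $L>0$. The function $g:\mathbb{R}^n\to(-\infty,\infty]$ is proper and lower semicontinuous, and for the $\gamma>0$ used, $\operatorname{Argmin}_u\{\gamma g(u)+\frac12\|u-w\|^2\}$ is nonempty for every $w\in\mathbb{R}^n$. PR splitting iteration: given $x^0$ and $\gamma>0$, for $t=0,1,2,\dots$: $y^{t+1}=\operatorname{argmin}_y\{f(y)+\frac{1}{2\gamma}\|y-x^t\|^2\}$; $z^{t+1}\in\operatorname{Argmin}_z\{g(z)+\frac{1}{2\gamma}\|2y^{t+1}-x^t-z\|^2\}$; $x^{t+1}=x^t+2(z^{t+1}-y^{t+1})$. *)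

(* Defs.v *)
From Stdlib Require Import Reals Lra.
From Stdlib Require Fin.
Open Scope R_scope.

Definition vec (n : nat) := Fin.t n -> R.

Definition vadd {n} (x y : vec n) : vec n := fun i => x i + y i.
Definition vsub {n} (x y : vec n) : vec n := fun i => x i - y i.
Definition vscal {n} (a : R) (x : vec n) : vec n := fun i => a * x i.

Fixpoint dot {n : nat} : vec n -> vec n -> R :=
  match n return vec n -> vec n -> R with
  | O => fun _ _ => 0
  | S m => fun x y => x Fin.F1 * y Fin.F1 +
                      @dot m (fun i => x (Fin.FS i)) (fun i => y (Fin.FS i))
  end.

Definition norm {n} (x : vec n) : R := sqrt (dot x x).

Definition has_gradient_at {n} (f : vec n -> R) (x d : vec n) : Prop :=
  forall eps, 0 < eps -> exists delta, 0 < delta /\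
    forall h : vec n, norm h < delta ->
      Rabs (f (vadd x h) - f x - dot d h) <= eps * norm h.

Definition convex_fun {n} (F : vec n -> R) : Prop :=
  forall (x y : vec n) (t : R), 0 <= t <= 1 ->
    F (vadd (vscal t x) (vscal (1 - t) y)) <= t * F x + (1 - t) * F y.

Definition strongly_convex {n} (f : vec n -> R) (sigma : R) : Prop :=
  convex_fun (fun u => f u - sigma / 2 * norm u ^ 2).

Definition lipschitz {n} (G : vec n -> vec n) (L : R) : Prop :=
  forall x y, norm (vsub (G x) (G y)) <= L * norm (vsub x y).

(* Extended reals (-oo, +oo]: Some r = r, None = +oo *)
Definition xreal := option R.
Definition xle (a b : xreal) : Prop :=
  match b with
  | None => True
  | Some rb => match a with Some ra => ra <= rb | None => False end
  end.
Definition xlt_r (a : R) (b : xreal) : Prop :=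
  match b with None => True | Some rb => a < rb end.
Definition xadd_r (a : xreal) (r : R) : xreal := option_map (fun s => s + r) a.
Definition xscal (c : R) (a : xreal) : xreal := option_map (fun s => c * s) a.

Definition proper_fun {n} (g : vec n -> xreal) : Prop := exists x, g x <> None.

Definition lsc {n} (g : vec n -> xreal) : Prop :=
  forall (x : vec n) (a : R), xlt_r a (g x) ->
    exists delta, 0 < delta /\
      forall y, norm (vsub y x) < delta -> xlt_r a (g y).

Definition is_argmin {n} (F : vec n -> xreal) (u : vec n) : Prop :=
  forall v, xle (F u) (F v).

Definition coercive_sum {n} (f : vec n -> R) (g : vec n -> xreal) : Prop :=
  forall M : R, exists R0 : R, forall u, R0 < norm u -> xlt_r M (xadd_r (g u) (f u)).

Definition PR_sequence {n} (f : vec n -> R) (g : vec n -> xreal) (gamma : R)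
    (y z x : nat -> vec n) : Prop :=
  forall t : nat,
    is_argmin (fun v => Some (f v + / (2 * gamma) * norm (vsub v (x t)) ^ 2)) (y (S t)) /\
    is_argmin (fun v => xadd_r (g v)
                 (/ (2 * gamma) * norm (vsub (vsub (vscal 2 (y (S t))) (x t)) v) ^ 2))
              (z (S t)) /\
    x (S t) = vadd (x t) (vscal 2 (vsub (z (S t)) (y (S t)))).

(* Main.v *)
Require Import Defs.
From Stdlib Require Import Reals Lra Lia Psatz FunctionalExtensionality.
Open Scope R_scope.

Lemma dot_addl {n} (x y w : vec n) : dot (vadd x y) w = dot x w + dot y w.
Proof. induction n as [|n IH]; simpl. lra.
  specialize (IH (fun i => x (Fin.FS i)) (fun i => y (Fin.FS i)) (fun i => w (Fin.FS i))).
  unfold vadd in *. rewrite IH. ring. Qed.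
Lemma dot_subl {n} (x y w : vec n) : dot (vsub x y) w = dot x w - dot y w.
Proof. induction n as [|n IH]; simpl. lra.
  specialize (IH (fun i => x (Fin.FS i)) (fun i => y (Fin.FS i)) (fun i => w (Fin.FS i))).
  unfold vsub in *. rewrite IH. ring. Qed.
Lemma dot_scall {n} a (x w : vec n) : dot (vscal a x) w = a * dot x w.
Proof. induction n as [|n IH]; simpl. lra.
  specialize (IH (fun i => x (Fin.FS i)) (fun i => w (Fin.FS i))).
  unfold vscal in *. rewrite IH. ring. Qed.
Lemma dot_comm {n} (x w : vec n) : dot x w = dot w x.
Proof. induction n as [|n IH]; simpl. lra.
  rewrite IH. ring. Qed.
Lemma dot_addr {n} (x y w : vec n) : dot w (vadd x y) = dot w x + dot w y.
Proof. rewrite !(dot_comm w). apply dot_addl. Qed.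
Lemma dot_subr {n} (x y w : vec n) : dot w (vsub x y) = dot w x - dot w y.
Proof. rewrite !(dot_comm w). apply dot_subl. Qed.
Lemma dot_scalr {n} a (x w : vec n) : dot w (vscal a x) = a * dot w x.
Proof. rewrite !(dot_comm w). apply dot_scall. Qed.
Lemma dot_nonneg {n} (x : vec n) : 0 <= dot x x.
Proof. induction n as [|n IH]; simpl. lra.
  specialize (IH (fun i => x (Fin.FS i))). nra. Qed.
Lemma dot_zero_inv {n} (x : vec n) : dot x x = 0 -> forall i, x i = 0.
Proof. induction n as [|n IH]; intros H i. inversion i.
  simpl in H. pose proof (dot_nonneg (fun i => x (Fin.FS i))).
  assert (x Fin.F1 = 0) by nra.
  assert (H2 : dot (fun i => x (Fin.FS i)) (fun i => x (Fin.FS i)) = 0) by nra.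
  apply (Fin.caseS' i (fun i => x i = 0)). exact H1.
  intro p. exact (IH _ H2 p). Qed.
Lemma norm_sq {n} (x : vec n) : norm x ^ 2 = dot x x.
Proof. unfold norm. rewrite pow2_sqrt; auto using dot_nonneg. Qed.

Ltac expand := repeat first [rewrite dot_addl | rewrite dot_addr | rewrite dot_subl | rewrite dot_subr | rewrite dot_scall | rewrite dot_scalr].

Lemma norm_nonneg {n} (x : vec n) : 0 <= norm x.
Proof. unfold norm; apply sqrt_pos. Qed.

Lemma norm_scal_pos {n} t (x : vec n) : 0 <= t -> norm (vscal t x) = t * norm x.
Proof. intro Ht. unfold norm. rewrite dot_scall, dot_scalr, <- Rmult_assoc.
  rewrite sqrt_mult_alt by nra. rewrite sqrt_square by lra. reflexivity. Qed.

Lemma real_lim (A nD S : R) : 0 <= nD -> 0 <= S ->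
  (forall eps, 0 < eps -> exists delta, 0 < delta /\
     forall t, 0 < t -> t <= 1 -> t * nD < delta -> A <= eps * nD + t * S) -> A <= 0.
Proof.
  intros HnD HS H. destruct (Rle_or_lt A 0) as [h|h]; [exact h|].
  exfalso. set (eps := A / (2 * (nD + 1))).
  assert (Heps : 0 < eps) by (unfold eps; apply Rdiv_lt_0_compat; lra).
  destruct (H eps Heps) as [delta [Hd Ht]].
  set (t := Rmin 1 (Rmin (delta / (nD + 1)) (A / (2 * (S + 1))))).
  assert (t1 : t <= 1) by apply Rmin_l.
  assert (t2 : t <= delta / (nD + 1)) by (eapply Rle_trans; [apply Rmin_r| apply Rmin_l]).
  assert (t3 : t <= A / (2 * (S + 1))) by (eapply Rle_trans; [apply Rmin_r| apply Rmin_r]).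
  assert (t0 : 0 < t).
  { unfold t. apply Rmin_glb_lt; [lra|]. apply Rmin_glb_lt; apply Rdiv_lt_0_compat; lra. }
  assert (E1 : t * (nD + 1) <= delta).
  { apply (Rmult_le_compat_r (nD+1)) in t2; [|lra]. unfold Rdiv in t2.
    rewrite Rmult_assoc, Rinv_l in t2 by lra. lra. }
  assert (E2 : t * (2 * (S + 1)) <= A).
  { apply (Rmult_le_compat_r (2*(S+1))) in t3; [|lra]. unfold Rdiv in t3.
    rewrite Rmult_assoc, Rinv_l in t3 by lra. lra. }
  assert (E3 : eps * (2 * (nD + 1)) = A).
  { unfold eps. field. lra. }
  assert (Hlt : t * nD < delta) by nra.
  specialize (Ht t t0 t1 Hlt). nra.
Qed.

Lemma abs_bnd (a b : R) : Rabs a <= b -> - b <= a <= b.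
Proof. unfold Rabs; destruct (Rcase_abs a); lra. Qed.
Ltac expand_in H := repeat first [rewrite dot_addl in H | rewrite dot_addr in H | rewrite dot_subl in H | rewrite dot_subr in H | rewrite dot_scall in H | rewrite dot_scalr in H].

Lemma opt_y {n} (f : vec n -> R) (df : vec n -> vec n) gamma
  (Hdiff : forall x, has_gradient_at f x (df x)) (Hg : 0 < gamma) (u w : vec n) :
  is_argmin (fun v => Some (f v + / (2 * gamma) * norm (vsub v w) ^ 2)) u ->
  w = vadd u (vscal gamma (df u)).
Proof.
  intro Hmin.
  remember (vsub u w) as p eqn:Hp.
  remember (vadd (df u) (vscal (/ gamma) p)) as D eqn:HD.
  assert (Hdd : dot D D = dot (df u) D + / gamma * dot p D).
  { rewrite HD at 1. expand. reflexivity. }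
  assert (Hle : dot D D <= 0).
  { apply (real_lim (dot D D) (norm D) (/ (2 * gamma) * dot D D)).
    - apply norm_nonneg.
    - apply Rmult_le_pos. left; apply Rinv_0_lt_compat; lra. apply dot_nonneg.
    - intros eps Heps. destruct (Hdiff u eps Heps) as [delta [Hd Hgr]].
      exists delta; split; [exact Hd|]. intros t Ht0 Ht1 Htd.
      set (h := vscal (- t) D).
      assert (Nh : norm h = t * norm D).
      { unfold h. replace (vscal (-t) D) with (vscal t (vscal (-1) D)).
        rewrite norm_scal_pos by lra. unfold norm. rewrite dot_scall, dot_scalr.
        replace (-1 * (-1 * dot D D)) with (dot D D) by ring. reflexivity.
        apply functional_extensionality; intro i; unfold vscal; ring. }
      specialize (Hgr h). rewrite Nh in Hgr. specialize (Hgr Htd).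
      specialize (Hmin (vadd u h)). unfold xle in Hmin.
      rewrite !norm_sq in Hmin.
      replace (vsub (vadd u h) w) with (vadd p h) in Hmin
        by (subst p; apply functional_extensionality; intro i; unfold vadd, vsub; ring).
      rewrite <- Hp in Hmin.
      unfold h in Hmin, Hgr. expand.
      rewrite dot_scalr in Hgr.
      expand_in Hmin. rewrite (dot_comm D p) in Hmin.
      apply abs_bnd in Hgr. idtac. 
      assert (Hc : / (2 * gamma) * (2 * (- t * dot p D)) = - t * (/ gamma * dot p D))
        by (field; lra).
      assert (H1 : t * dot D D <= t * (eps * norm D + t * (/ (2 * gamma) * dot D D))).
      { assert (Htd2 : t * dot D D = t * dot (df u) D + t * (/ gamma * dot p D)) by (rewrite Hdd; ring).
        assert (Hc2 : / (2 * gamma) * (2 * (- t * dot p D)) = - t * (/ gamma * dot p D)) by (field; lra).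
        nra. }
      apply Rmult_le_reg_l in H1; lra. }
  assert (H0 : dot D D = 0) by (pose proof (dot_nonneg D); lra).
  apply functional_extensionality; intro i.
  pose proof (dot_zero_inv D H0 i) as Hi.
  rewrite HD, Hp in Hi. unfold vadd, vscal, vsub in *.
  apply (Rmult_eq_compat_l gamma) in Hi.
  rewrite Rmult_0_r, Rmult_plus_distr_l, <- Rmult_assoc, Rinv_r in Hi by lra. lra.
Qed.

Lemma sc_ineq {n} (f : vec n -> R) (df : vec n -> vec n) sigma
  (Hdiff : forall x, has_gradient_at f x (df x)) (Hsc : strongly_convex f sigma)
  (Hs : 0 < sigma) (a b : vec n) :
  f b + dot (df b) (vsub a b) + sigma / 2 * dot (vsub a b) (vsub a b) <= f a.
Proof.
  remember (vsub a b) as Dl eqn:HDl.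
  assert (Ha : a = vadd b Dl)
    by (subst Dl; apply functional_extensionality; intro i; unfold vadd, vsub; ring).
  enough (H : f b + dot (df b) Dl + sigma / 2 * dot Dl Dl - f a <= 0) by lra.
  apply (real_lim _ (norm Dl) (sigma / 2 * dot Dl Dl)).
  - apply norm_nonneg.
  - pose proof (dot_nonneg Dl); nra.
  - intros eps Heps. destruct (Hdiff b eps Heps) as [delta [Hd Hgr]].
    exists delta; split; [exact Hd|]. intros t Ht0 Ht1 Htd.
    specialize (Hgr (vscal t Dl)). rewrite norm_scal_pos in Hgr by lra.
    specialize (Hgr Htd). apply abs_bnd in Hgr. rewrite dot_scalr in Hgr.
    unfold strongly_convex, convex_fun in Hsc.
    specialize (Hsc a b t (conj (Rlt_le _ _ Ht0) Ht1)). cbv beta in Hsc.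
    replace (vadd (vscal t a) (vscal (1 - t) b)) with (vadd b (vscal t Dl)) in Hsc
      by (rewrite Ha; apply functional_extensionality; intro i; unfold vadd, vscal; ring).
    assert (Na : dot a a = dot b b + 2 * dot b Dl + dot Dl Dl)
      by (rewrite Ha; expand; rewrite (dot_comm Dl b); ring).
    rewrite !norm_sq in Hsc. rewrite Na in Hsc. expand_in Hsc.
    try rewrite (dot_comm Dl b) in Hsc. idtac.
    assert (H1 : t * (f b + dot (df b) Dl + sigma / 2 * dot Dl Dl - f a)
                 <= t * (eps * norm Dl + t * (sigma / 2 * dot Dl Dl))) by lra.
    apply Rmult_le_reg_l in H1; lra.
Qed.

Lemma mono {n} (f : vec n -> R) (df : vec n -> vec n) sigma
  (Hdiff : forall x, has_gradient_at f x (df x)) (Hsc : strongly_convex f sigma)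
  (Hs : 0 < sigma) (a b : vec n) :
  sigma * dot (vsub a b) (vsub a b) <= dot (vsub (df a) (df b)) (vsub a b).
Proof.
  pose proof (sc_ineq f df sigma Hdiff Hsc Hs a b) as H1.
  pose proof (sc_ineq f df sigma Hdiff Hsc Hs b a) as H2.
  expand_in H1. expand_in H2. expand.
  rewrite (dot_comm b a) in *. lra.
Qed.

Lemma lipsq {n} (df : vec n -> vec n) L (Hlip : lipschitz df L) (HL : 0 < L) (a b : vec n) :
  dot (vsub (df a) (df b)) (vsub (df a) (df b)) <= L ^ 2 * dot (vsub a b) (vsub a b).
Proof.
  rewrite <- !norm_sq. specialize (Hlip a b).
  pose proof (norm_nonneg (vsub (df a) (df b))). pose proof (norm_nonneg (vsub a b)).
  nra.
Qed.

Lemma gd_le {n} (df : vec n -> vec n) L (Hlip : lipschitz df L) (HL : 0 < L) (a b : vec n) :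
  dot (vsub (df a) (df b)) (vsub a b) <= L * dot (vsub a b) (vsub a b).
Proof.
  pose proof (lipsq df L Hlip HL a b) as H.
  remember (vsub (df a) (df b)) as G. remember (vsub a b) as Dl.
  pose proof (dot_nonneg (vsub G (vscal L Dl))) as H0. expand_in H0.
  rewrite (dot_comm Dl G) in H0.
  assert (H2 : L * (2 * dot G Dl) <= L * (2 * (L * dot Dl Dl))) by nra.
  apply Rmult_le_reg_l in H2; lra.
Qed.

Definition Phi {n} (f : vec n -> R) (df : vec n -> vec n) gamma (a zz : vec n) (r : R) :=
  f a + r - dot (df a) (vsub a zz) + / (2 * gamma) * dot (vsub a zz) (vsub a zz).

Lemma qexp {n} (gamma : R) (y d v : vec n) : 0 < gamma ->
  / (2 * gamma) * norm (vsub (vsub (vscal 2 y) (vadd y (vscal gamma d))) v) ^ 2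
  = / (2 * gamma) * dot (vsub y v) (vsub y v) - dot d (vsub y v) + gamma / 2 * dot d d.
Proof.
  intro Hg. rewrite norm_sq.
  replace (vsub (vsub (vscal 2 y) (vadd y (vscal gamma d))) v)
    with (vsub (vsub y v) (vscal gamma d))
    by (apply functional_extensionality; intro i; unfold vsub, vscal, vadd; ring).
  remember (vsub y v) as p. expand. rewrite (dot_comm d p). field. lra.
Qed.

Lemma stepY {n} (f : vec n -> R) (df : vec n -> vec n) sigma L gamma
  (Hdiff : forall x, has_gradient_at f x (df x)) (Hsc : strongly_convex f sigma)
  (Hlip : lipschitz df L) (Hs : 0 < sigma) (HL : 0 < L) (Hg : 0 < gamma)
  (K2 : gamma * L ^ 2 <= sigma) (a b zz : vec n) (r : R) :
  (forall i, 2 * zz i = b i + a i + gamma * (df b i - df a i)) ->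
  Phi f df gamma b zz r <= Phi f df gamma a zz r.
Proof.
  intro Hz.
  pose proof (sc_ineq f df sigma Hdiff Hsc Hs a b) as H1.
  pose proof (lipsq df L Hlip HL b a) as H2.
  remember (vsub b a) as Dl eqn:HDl. remember (vsub (df b) (df a)) as G eqn:HG.
  assert (E1 : vsub a b = vscal (-1) Dl)
    by (subst Dl; apply functional_extensionality; intro i; unfold vsub, vscal; ring).
  assert (E2 : vsub b zz = vscal (/2) (vsub Dl (vscal gamma G))).
  { subst; apply functional_extensionality; intro i; specialize (Hz i);
    unfold vsub, vscal in *; lra. }
  assert (E3 : vsub a zz = vscal (-/2) (vadd Dl (vscal gamma G))).
  { subst; apply functional_extensionality; intro i; specialize (Hz i);
    unfold vsub, vscal, vadd in *; lra. }
  assert (E4 : df b = vadd (df a) G)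
    by (subst; apply functional_extensionality; intro i; unfold vsub, vadd; ring).
  rewrite E1, E4 in H1. unfold Phi. rewrite E2, E3, E4.
  set (da := df a) in *.
  expand_in H1. expand.
  rewrite ?(dot_comm Dl da), ?(dot_comm G da), ?(dot_comm G Dl) in *.
  assert (H3 : gamma * dot G G <= gamma * (L ^ 2 * dot Dl Dl)) by (apply Rmult_le_compat_l; lra).
  assert (H4 : gamma * L ^ 2 * dot Dl Dl <= sigma * dot Dl Dl)
    by (apply Rmult_le_compat_r; [apply dot_nonneg | lra]).

  match goal with |- ?A <= ?B => replace A with
    (B + (f b - f a - (dot da Dl + dot Dl G) + gamma / 2 * dot G G)) by (field; lra) end.
  lra.
Qed.

Lemma LB {n} (f : vec n -> R) (df : vec n -> vec n) sigma L gamma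
  (Hdiff : forall x, has_gradient_at f x (df x)) (Hsc : strongly_convex f sigma)
  (Hlip : lipschitz df L) (Hs : 0 < sigma) (HL : 0 < L) (Hg : 0 < gamma)
  (K4 : 0 <= / (2 * gamma) + sigma / 2 - L) (yv zv : vec n) (r : R) :
  f zv + r <= Phi f df gamma yv zv r.
Proof.
  pose proof (sc_ineq f df sigma Hdiff Hsc Hs yv zv) as H1.
  pose proof (gd_le df L Hlip HL yv zv) as H2.
  unfold Phi. remember (vsub yv zv) as Dl.
  rewrite dot_subl in H2.
  assert (H3 : 0 <= (/ (2 * gamma) + sigma / 2 - L) * dot Dl Dl)
    by (apply Rmult_le_pos; [lra | apply dot_nonneg]).
  lra.
Qed.

Lemma stepZ {n} (f : vec n -> R) (df : vec n -> vec n) (g : vec n -> xreal) gamma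
  (Hg : 0 < gamma) (yv w zv v : vec n) (gz gv : R) :
  w = vadd yv (vscal gamma (df yv)) ->
  is_argmin (fun v => xadd_r (g v)
                 (/ (2 * gamma) * norm (vsub (vsub (vscal 2 yv) w) v) ^ 2)) zv ->
  g zv = Some gz -> g v = Some gv ->
  Phi f df gamma yv zv gz <= Phi f df gamma yv v gv.
Proof.
  intros Hw Hmin Hz Hv. specialize (Hmin v). unfold xle, xadd_r in Hmin.
  rewrite Hz, Hv in Hmin. unfold option_map in Hmin. rewrite Hw in Hmin.
  idtac.
  rewrite !qexp in Hmin by lra. unfold Phi. lra.
Qed.

Lemma vsub0 {n} (b : vec n) : vsub b (fun _ => 0) = b.
Proof. apply functional_extensionality; intro i; unfold vsub; ring. Qed.

Lemma YR {n} (f : vec n -> R) (df : vec n -> vec n) sigma L gamma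
  (Hdiff : forall x, has_gradient_at f x (df x)) (Hsc : strongly_convex f sigma)
  (Hlip : lipschitz df L) (Hs : 0 < sigma) (HL : 0 < L) (Hg : 0 < gamma)
  (K2 : gamma * L ^ 2 <= sigma) (a b zz : vec n) :
  (forall i, 2 * zz i = b i + a i + gamma * (df b i - df a i)) ->
  dot b b <= (1 - gamma * sigma / 2) * dot a a + (1 + 2 / (gamma * sigma)) * (4 * dot zz zz).
Proof.
  intro Hz.
  set (z0 := fun _ : Fin.t n => 0).
  pose proof (mono f df sigma Hdiff Hsc Hs b z0) as Mb.
  pose proof (mono f df sigma Hdiff Hsc Hs a z0) as Ma.
  pose proof (lipsq df L Hlip HL a z0) as La.
  unfold z0 in Mb, Ma, La. rewrite !vsub0 in Mb, Ma, La.
  set (d0 := df (fun _ => 0)) in *.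
  remember (vsub (df b) d0) as Gb. remember (vsub (df a) d0) as Ga.
  set (k := gamma * sigma).
  assert (Hk : 0 < k) by (unfold k; nra).
  set (e := k / 2).
  assert (He : 0 < e) by (unfold e; lra).
  assert (HP : vadd b (vscal gamma Gb) = vsub (vscal 2 zz) (vsub a (vscal gamma Ga))).
  { subst; apply functional_extensionality; intro i; specialize (Hz i).
    unfold vsub, vscal, vadd in *; lra. }
  assert (LP : dot b b <= dot (vadd b (vscal gamma Gb)) (vadd b (vscal gamma Gb))).
  { expand. rewrite (dot_comm Gb b) in *.
    assert (0 <= gamma * (gamma * dot Gb Gb)) by (apply Rmult_le_pos; [lra|apply Rmult_le_pos; [lra|apply dot_nonneg]]).
    assert (gamma * (sigma * dot b b) <= gamma * dot b Gb) by (apply Rmult_le_compat_l; lra).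
    assert (0 <= gamma * (sigma * dot b b)) by (apply Rmult_le_pos; [lra|apply Rmult_le_pos; [lra|apply dot_nonneg]]).
    lra. }
  remember (vsub a (vscal gamma Ga)) as T.
  assert (LT : dot T T <= (1 - k) * dot a a).
  { subst T. expand. rewrite (dot_comm Ga a) in *.
    assert (gamma * (sigma * dot a a) <= gamma * dot a Ga) by (apply Rmult_le_compat_l; lra).
    assert (gamma * (gamma * dot Ga Ga) <= gamma * (gamma * (L ^ 2 * dot a a)))
      by (apply Rmult_le_compat_l; [lra|]; apply Rmult_le_compat_l; lra).
    assert (gamma * (gamma * L ^ 2 * dot a a) <= gamma * (sigma * dot a a))
      by (apply Rmult_le_compat_l; [lra|]; apply Rmult_le_compat_r; [apply dot_nonneg|lra]).
    unfold k. lra. }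
  assert (Yg : dot (vsub (vscal 2 zz) T) (vsub (vscal 2 zz) T)
               <= (1 + e) * dot T T + (1 + 1 / e) * (4 * dot zz zz)).
  { pose proof (dot_nonneg (vadd (vscal e T) (vscal 2 zz))) as H0.
    expand_in H0. expand. rewrite (dot_comm zz T) in *.
    assert (H5 : e * (- (4 * dot T zz)) <= e * (e * dot T T + / e * (4 * dot zz zz))).
    { replace (e * (e * dot T T + / e * (4 * dot zz zz))) with
        (e * (e * dot T T) + 4 * dot zz zz) by (field; lra). lra. }
    apply Rmult_le_reg_l in H5; [|lra].
    unfold Rdiv. rewrite Rmult_1_l. lra. }
  rewrite HP in LP.
  assert (H6 : (1 + e) * dot T T <= (1 + e) * ((1 - k) * dot a a))
    by (apply Rmult_le_compat_l; lra).
  assert (H7 : 0 <= k * k * dot a a) by (apply Rmult_le_pos; [nra|apply dot_nonneg]).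
  assert (E : 1 + 1 / e = 1 + 2 / k) by (unfold e; field; lra).
  rewrite <- E. unfold e in *. lra.
Qed.

Lemma XB {n} (f : vec n -> R) (df : vec n -> vec n) L gamma
  (Hlip : lipschitz df L) (HL : 0 < L) (Hg : 0 < gamma) (b : vec n) :
  dot (vadd b (vscal gamma (df b))) (vadd b (vscal gamma (df b)))
  <= 2 * ((1 + gamma * L) ^ 2 * dot b b) + 2 * (gamma ^ 2 * dot (df (fun _ => 0)) (df (fun _ => 0))).
Proof.
  pose proof (gd_le df L Hlip HL b (fun _ => 0)) as H1.
  pose proof (lipsq df L Hlip HL b (fun _ => 0)) as H2.
  rewrite !vsub0 in H1, H2.
  set (d0 := df (fun _ => 0)) in *.
  replace (vadd b (vscal gamma (df b))) with
    (vadd (vadd b (vscal gamma (vsub (df b) d0))) (vscal gamma d0))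
    by (apply functional_extensionality; intro i; unfold vsub, vscal, vadd; ring).
  remember (vsub (df b) d0) as Gb. remember (vadd b (vscal gamma Gb)) as P.
  pose proof (dot_nonneg (vsub P (vscal gamma d0))) as H0.
  assert (HPP : dot P P <= (1 + gamma * L) ^ 2 * dot b b).
  { subst P. expand. rewrite (dot_comm b Gb) in *.
    assert (gamma * dot Gb b <= gamma * (L * dot b b)) by (apply Rmult_le_compat_l; lra).
    assert (gamma * (gamma * dot Gb Gb) <= gamma * (gamma * (L ^ 2 * dot b b)))
      by (apply Rmult_le_compat_l; [lra|]; apply Rmult_le_compat_l; lra).
    lra. }
  expand_in H0. expand. rewrite (dot_comm d0 P) in *. lra.
Qed.

Lemma rec_bound (u : nat -> R) q K : 0 <= q < 1 -> 0 <= K ->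
  (forall t, u (S (S t)) <= q * u (S t) + K) -> forall t, u (S t) <= Rmax (u 1%nat) (K / (1 - q)).
Proof.
  intros Hq HK H t. set (B := Rmax (u 1%nat) (K / (1 - q))).
  assert (HB1 : u 1%nat <= B) by apply Rmax_l.
  assert (HB2 : K / (1 - q) <= B) by apply Rmax_r.
  assert (HB3 : K <= (1 - q) * B).
  { apply (Rmult_le_compat_l (1 - q)) in HB2; [|lra].
    replace ((1 - q) * (K / (1 - q))) with K in HB2 by (field; lra). exact HB2. }
  induction t as [|t IH]; [exact HB1|].
  specialize (H t). assert (q * u (S t) <= q * B) by (apply Rmult_le_compat_l; lra). lra.
Qed.

Lemma main_le (n : nat) (f : vec n -> R) (df : vec n -> vec n)
  (g : vec n -> xreal) (sigma L gamma : R)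
  (Hsigma : 0 < sigma) (HL : 0 < L)
  (Hdiff : forall x, has_gradient_at f x (df x))
  (Hsc : strongly_convex f sigma)
  (Hlip : lipschitz df L)
  (Hproper : proper_fun g)
  (Hgam : 0 < gamma)
  (H3 : 3 * sigma > 2 * L)
  (Hgam2 : gamma < (3 * sigma - 2 * L) / L ^ 2)
  (Hcoer : coercive_sum f g)
  (y z x : nat -> vec n)
  (Hseq : PR_sequence f g gamma y z x) (HsL : sigma <= L) :
  exists M : R, forall t : nat,
    norm (x t) <= M /\ ((1 <= t)%nat -> norm (y t) <= M /\ norm (z t) <= M).
Proof.
  assert (K1 : gamma * L ^ 2 < 3 * sigma - 2 * L).
  { apply (Rmult_lt_compat_r (L ^ 2)) in Hgam2; [|nra].
    unfold Rdiv in Hgam2. rewrite Rmult_assoc, Rinv_l in Hgam2 by nra. lra. }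
  assert (K2 : gamma * L ^ 2 <= sigma) by lra.
  assert (K3 : gamma * L < 1).
  { assert (gamma * L * L < 1 * L) by nra. nra. }
  assert (K4 : 0 <= / (2 * gamma) + sigma / 2 - L).
  { assert (gamma * (2 * L - sigma) <= 1).
    { destruct (Rle_or_lt (2 * L - sigma) 0). nra.
      assert (gamma * L ^ 2 * (2 * L - sigma) <= (3 * sigma - 2 * L) * (2 * L - sigma)) by nra.
      assert ((3 * sigma - 2 * L) * (2 * L - sigma) <= L ^ 2) by nra.
      nra. }
    assert (/ (2 * gamma) = / gamma * / 2) by (field; lra).
    assert (/ gamma * (gamma * (2 * L - sigma)) <= / gamma * 1).
    { apply Rmult_le_compat_l; [left; apply Rinv_0_lt_compat; lra | lra]. }
    rewrite <- Rmult_assoc, Rinv_l in H1 by lra. lra. }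
  assert (HX : forall t, x t = vadd (y (S t)) (vscal gamma (df (y (S t))))).
  { intro t. destruct (Hseq t) as [Hy _]. exact (opt_y f df gamma Hdiff Hgam _ _ Hy). }
  assert (Hrel : forall t i, 2 * z (S t) i = y (S (S t)) i + y (S t) i
                    + gamma * (df (y (S (S t))) i - df (y (S t)) i)).
  { intros t i. destruct (Hseq t) as [_ [_ Hu]].
    pose proof (HX (S t)) as A1. pose proof (HX t) as A2.
    assert (E0 := eq_trans (eq_sym A1) Hu). rewrite A2 in E0.
    pose proof (f_equal (fun v => v i) E0) as E. cbv beta in E.
    unfold vadd, vscal, vsub in E. lra. }
  destruct Hproper as [x0 Hx0]. destruct (g x0) as [r0|] eqn:E0; [|congruence].
  set (gz := fun t => match g (z t) with Some r => r | None => 0 end).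
  assert (Hgz : forall t, g (z (S t)) = Some (gz (S t))).
  { intro t. destruct (Hseq t) as [_ [Hz _]]. specialize (Hz x0).
    unfold gz. destruct (g (z (S t))) as [r|] eqn:E; [reflexivity|].
    exfalso. unfold xle, xadd_r in Hz. revert Hz. rewrite E, E0. simpl. tauto. }
  set (P := fun t => Phi f df gamma (y (S t)) (z (S t)) (gz (S t))).
  assert (PhiB : forall t, P t <= P 0%nat).
  { induction t as [|t IH]; [lra|].
    unfold P in *.
    destruct (Hseq (S t)) as [_ [Hz _]].
    pose proof (stepZ f df g gamma Hgam _ _ _ _ _ _ (HX (S t)) Hz (Hgz (S t)) (Hgz t)) as S1.
    pose proof (stepY f df sigma L gamma Hdiff Hsc Hlip Hsigma HL Hgam K2
                  (y (S t)) (y (S (S t))) (z (S t)) (gz (S t)) (Hrel t)) as S2.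
    lra. }
  destruct (Hcoer (P 0%nat)) as [R0 HR0].
  assert (ZB : forall t, norm (z (S t)) <= R0).
  { intro t. destruct (Rle_or_lt (norm (z (S t))) R0) as [h|h]; [exact h|].
    exfalso. specialize (HR0 _ h). rewrite Hgz in HR0. simpl in HR0.
    pose proof (LB f df sigma L gamma Hdiff Hsc Hlip Hsigma HL Hgam K4
                  (y (S t)) (z (S t)) (gz (S t))) as H0.
    specialize (PhiB t). unfold P in *. lra. }
  assert (HR0p : 0 <= R0) by (specialize (ZB 0%nat); pose proof (norm_nonneg (z 1%nat)); lra).
  assert (ZB2 : forall t, dot (z (S t)) (z (S t)) <= R0 ^ 2).
  { intro t. rewrite <- norm_sq. specialize (ZB t). pose proof (norm_nonneg (z (S t))). nra. }
  set (k := gamma * sigma).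
  assert (Hk : 0 < k) by (unfold k; nra).
  assert (Hk1 : k < 1) by (unfold k; nra).
  set (K := (1 + 2 / k) * (4 * R0 ^ 2)).
  assert (HK : 0 <= K).
  { unfold K. apply Rmult_le_pos; [|nra].
    assert (0 < 2 / k) by (apply Rdiv_lt_0_compat; lra). lra. }
  set (u := fun t => dot (y t) (y t)).
  assert (YB : forall t, u (S t) <= Rmax (u 1%nat) (K / (1 - (1 - k / 2)))).
  { apply rec_bound; [lra | exact HK |]. intro t. unfold u.
    pose proof (YR f df sigma L gamma Hdiff Hsc Hlip Hsigma HL Hgam K2
                  (y (S t)) (y (S (S t))) (z (S t)) (Hrel t)) as H0.
    fold k in H0.
    assert ((1 + 2 / k) * (4 * dot (z (S t)) (z (S t))) <= K).
    { unfold K. apply Rmult_le_compat_l.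
      assert (0 < 2 / k) by (apply Rdiv_lt_0_compat; lra). lra.
      specialize (ZB2 t). lra. }
    replace (1 - gamma * sigma / 2) with (1 - k / 2) in H0 by (unfold k; ring). lra. }
  set (By := Rmax (u 1%nat) (K / (1 - (1 - k / 2)))).
  assert (YB' : forall t, dot (y (S t)) (y (S t)) <= By) by (intro t; exact (YB t)).
  assert (HBy : 0 <= By) by (eapply Rle_trans; [apply (dot_nonneg (y 1%nat)) | apply (Rmax_l _ (K / (1 - (1 - k / 2))))]).
  set (Bx := 2 * ((1 + gamma * L) ^ 2 * By) + 2 * (gamma ^ 2 * dot (df (fun _ => 0)) (df (fun _ => 0)))).
  assert (XB2 : forall t, dot (x t) (x t) <= Bx).
  { intro t. rewrite HX. eapply Rle_trans. apply (XB f df L gamma Hlip HL Hgam).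
    unfold Bx. specialize (YB' t).
    assert ((1 + gamma * L) ^ 2 * dot (y (S t)) (y (S t)) <= (1 + gamma * L) ^ 2 * By)
      by (apply Rmult_le_compat_l; [apply pow2_ge_0 | lra]). lra. }
  assert (HBx : 0 <= Bx) by (eapply Rle_trans; [apply (dot_nonneg (x 0%nat)) | apply (XB2 0%nat)]).
  exists (sqrt (By + R0 ^ 2 + Bx)).
  intro t. split.
  - unfold norm. apply sqrt_le_1_alt. specialize (XB2 t). pose proof (pow2_ge_0 R0). lra.
  - intro Ht. destruct t as [|t]; [lia|]. split.
    + unfold norm. apply sqrt_le_1_alt. specialize (YB' t). pose proof (pow2_ge_0 R0). lra.
    + unfold norm. apply sqrt_le_1_alt. specialize (ZB2 t). lra.
Qed.

Theorem theorem2 (n : nat) (f : vec n -> R) (df : vec n -> vec n)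
  (g : vec n -> xreal) (sigma L gamma : R)
  (Hsigma : 0 < sigma) (HL : 0 < L)
  (Hdiff : forall x, has_gradient_at f x (df x))
  (Hsc : strongly_convex f sigma)
  (Hlip : lipschitz df L)
  (Hproper : proper_fun g) (Hlsc : lsc g)
  (Hgam : 0 < gamma)
  (Hprox : forall w : vec n, exists u,
      is_argmin (fun v => xadd_r (xscal gamma (g v)) (/ 2 * norm (vsub v w) ^ 2)) u)
  (H3 : 3 * sigma > 2 * L)
  (Hgam2 : gamma < (3 * sigma - 2 * L) / L ^ 2)
  (Hcoer : coercive_sum f g)
  (y z x : nat -> vec n)
  (Hseq : PR_sequence f g gamma y z x) :
  exists M : R, forall t : nat,
    norm (x t) <= M /\ ((1 <= t)%nat -> norm (y t) <= M /\ norm (z t) <= M).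
Proof.
  destruct n as [|m].
  - exists 0. intro t. unfold norm. simpl. rewrite sqrt_0. lra.
  - apply (main_le (S m) f df g sigma L gamma Hsigma HL Hdiff Hsc Hlip Hproper Hgam H3 Hgam2
             Hcoer y z x Hseq).
    set (e := fun _ : Fin.t (S m) => 1).
    pose proof (mono f df sigma Hdiff Hsc Hsigma e (fun _ => 0)) as H1.
    pose proof (gd_le df L Hlip HL e (fun _ => 0)) as H2.
    rewrite !vsub0 in H1, H2.
    assert (He : 1 <= dot e e).
    { simpl. pose proof (dot_nonneg (fun i : Fin.t m => e (Fin.FS i))). unfold e at 1 2. lra. }
    assert (H4 : sigma * dot e e <= L * dot e e) by lra.
    apply Rmult_le_reg_r in H4; lra.
Qed.
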